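(* Let $f\colon\mathbb{Z}_p^r\to\mathbb{Q}_p$ be a continuous function such that $f(\overline{x})\neq 0$ for all $\overline{x}\in\mathbb{Z}_p^r$. Then $R(f)$ is not dense in $\mathbb{Q}_p$.
   Context: For a function $f$ on $\mathbb{Z}_p^r$, $R(f)=\{f(\overline{x})/f(\overline{y}) : \overline{x},\overline{y}\in\mathbb{Z}^r,\ f(\overline{y})\neq 0\}$; density is in the $p$-adic topology. *)

(* Defs.v *)
From HB Require Import structures.
From mathcomp Require Import all_boot all_order all_algebra.
Set Implicit Arguments. Unset Strict Implicit. Unset Printing Implicit Defensive.
Import Order.TTheory GRing.Theory Num.Theory.
Local Open Scope ring_scope.

Definition padic_abs (p : nat) (q : rat) : rat :=
  if q == 0 then 0
  else (p%:R : rat) ^ ((logn p `|denq q|%N)%:Z - (logn p `|numq q|%N)%:Z).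

Record is_Qp (p : nat) (K : fieldType) (N : K -> rat) : Prop := {
  Qp_prime : prime p;
  Qp_N0 : forall x, N x = 0 <-> x = 0;
  Qp_Nge0 : forall x, 0 <= N x;
  Qp_NM : forall x y, N (x * y) = N x * N y;
  Qp_ultra : forall x y, N (x + y) <= Num.max (N x) (N y);
  Qp_Nrat : forall q : rat, N (ratr q) = padic_abs p q;
  Qp_dense : forall (x : K) (e : rat), 0 < e -> exists q : rat, N (x - ratr q) < e;
  Qp_complete : forall u : nat -> K,
    (forall e : rat, 0 < e -> exists n0, forall m n, (n0 <= m)%N -> (n0 <= n)%N ->
        N (u m - u n) < e) ->
    exists l : K, forall e : rat, 0 < e -> exists n0, forall n, (n0 <= n)%N ->
        N (u n - l) < e
}.

Arguments is_Qp : clear implicits.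

Definition in_Zpr (K : fieldType) (N : K -> rat) (r : nat) (x : 'I_r -> K) : Prop :=
  forall i, N (x i) <= 1.

(* continuity on Z_p^r (product topology = sup-norm topology) *)
Definition continuous_on_Zpr (K : fieldType) (N : K -> rat) (r : nat)
    (f : ('I_r -> K) -> K) : Prop :=
  forall x, in_Zpr N x -> forall e : rat, 0 < e -> exists d : rat, 0 < d /\
    forall y, in_Zpr N y -> (forall i, N (y i - x i) < d) -> N (f y - f x) < e.

Definition int_pt (K : fieldType) (r : nat) (x : 'I_r -> int) : 'I_r -> K :=
  fun i => (x i)%:~R.

Definition Rset (K : fieldType) (r : nat) (f : ('I_r -> K) -> K) (z : K) : Prop :=
  exists (x y : 'I_r -> int), f (int_pt K y) <> 0 /\ z = f (int_pt K x) / f (int_pt K y).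

Definition dense_in_Qp (K : fieldType) (N : K -> rat) (S : K -> Prop) : Prop :=
  forall (a : K) (e : rat), 0 < e -> exists z, S z /\ N (z - a) < e.

(* Main.v *)
Require Import Defs.
From mathcomp Require Import all_boot all_order all_algebra.
From Stdlib Require Import ClassicalEpsilon Classical.
From mathcomp Require Import ring.
Set Implicit Arguments. Unset Strict Implicit. Unset Printing Implicit Defensive.
Import Order.TTheory GRing.Theory Num.Theory.
Local Open Scope ring_scope.

Definition pk (p k : nat) : rat := ((p%:R : rat) ^+ k)^-1.

Lemma pk_gt0 p k : prime p -> 0 < pk p k.
Proof. move=> pr; rewrite /pk invr_gt0 exprn_gt0 // ltr0n prime_gt0 //. Qed.

Lemma pk_le p k m : prime p -> (k <= m)%N -> pk p m <= pk p k.
Proof.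
move=> pr km; rewrite /pk lef_pV2 ?posrE ?exprn_gt0 ?ltr0n ?prime_gt0 //.
by rewrite ler_eXn2l // ltr1n prime_gt1.
Qed.

Lemma pk_small p (e : rat) : prime p -> 0 < e -> exists k, pk p k < e.
Proof.
move=> pr e0; exists (Num.Def.archi_bound e^-1).
set n := Num.Def.archi_bound _.
have h : e^-1 < n%:R by apply: archi_boundP; rewrite invr_ge0 ltW.
rewrite /pk invf_plt ?posrE ?exprn_gt0 ?ltr0n ?prime_gt0 //.
apply: (lt_le_trans h); rewrite -natrX ler_nat; apply: ltnW; exact: ltn_expl (prime_gt1 pr).
Qed.

Lemma padic_int p (z : int) : prime p -> (z != 0) ->
  padic_abs p z%:~R = pk p (logn p `|z|).
Proof.
move=> pr z0; rewrite /padic_abs intr_eq0 (negbTE z0) numq_int denq_int /= logn1 add0r.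
by rewrite -exprnN /pk.
Qed.

Lemma Nint p K N (HK : is_Qp p K N) (z : int) k :
  (p ^ k %| `|z|)%N -> N z%:~R <= pk p k.
Proof.
move=> d; have pr := Qp_prime HK.
rewrite -ratr_int (Qp_Nrat HK); have [->|z0] := eqVneq z 0.
  by rewrite /padic_abs eqxx ltW // pk_gt0.
rewrite padic_int //; apply: pk_le => //.
by rewrite -pfactor_dvdn // absz_gt0.
Qed.

Lemma N1 p K N (HK : is_Qp p K N) : N 1 = 1.
Proof.
have pr := Qp_prime HK.
have -> : (1 : K) = 1%:~R by []. by rewrite -(ratr_int K 1) (Qp_Nrat HK) padic_int // /pk logn1 expr0 invr1.
Qed.

Lemma NN p K N (HK : is_Qp p K N) x : N (- x) = N x.
Proof.
have h : N (-1) = 1.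
  have : N (-1) ^+ 2 == 1 by rewrite expr2 -(Qp_NM HK) mulrNN mulr1 (N1 HK).
  rewrite sqrf_eq1 => /orP[/eqP //|/eqP h].
  by have := Qp_Nge0 HK (-1); rewrite h.
by rewrite -mulN1r (Qp_NM HK) h mul1r.
Qed.

Lemma NV p K N (HK : is_Qp p K N) x : x != 0 -> N x^-1 = (N x)^-1.
Proof.
move=> x0; have Nx0 : N x != 0 by apply/eqP => /(Qp_N0 HK) h; by rewrite h eqxx in x0.
apply: (mulfI Nx0); rewrite -(Qp_NM HK) divff // divff //; exact: N1 HK.
Qed.

Lemma Nle p K N (HK : is_Qp p K N) a b d : N a <= d -> N b <= d -> N (a + b) <= d.
Proof. move=> ha hb; apply: le_trans (Qp_ultra HK a b) _; by rewrite ge_max ha hb. Qed.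

Lemma Nlt p K N (HK : is_Qp p K N) a b d : N a < d -> N b < d -> N (a + b) < d.
Proof. move=> ha hb; apply: le_lt_trans (Qp_ultra HK a b) _; by rewrite gt_max ha hb. Qed.

Definition divs (p k : nat) (r : nat) (x c : 'I_r -> int) : Prop :=
  forall i, ((p ^ k)%N%:Z %| x i - c i)%Z.

Definition bad (p : nat) (K : fieldType) (r : nat) (phi : ('I_r -> K) -> rat)
  (c : 'I_r -> int) (k : nat) : Prop :=
  forall M : rat, exists x, divs p k x c /\ M < phi (int_pt K x).

Lemma step p K r phi c k : prime p -> @bad p K r phi c k ->
  exists c', divs p k c' c /\ bad p phi c' k.+1.
Proof.
move=> pr hb; apply: NNPP => hn.
have hM : forall t : {ffun 'I_r -> 'I_p}, exists M : rat, forall x,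
    divs p k.+1 x (fun i => c i + (p ^ k)%N%:Z * (t i)%:Z) -> phi (int_pt K x) <= M.
  move=> t; apply: NNPP => hM; apply: hn.
  exists (fun i => c i + (p ^ k)%N%:Z * (t i)%:Z); split.
    by move=> i; rewrite addrC addKr dvdz_mulr.
  move=> M; apply: NNPP => hx; apply: hM; exists M => x dx.
  rewrite leNgt; apply/negP => lt; apply: hx; by exists x.
pose Mf t := proj1_sig (constructive_indefinite_description _ (hM t)).
have Mfs t := proj2_sig (constructive_indefinite_description _ (hM t)).
have [x [dx lt]] := hb (\sum_t `|Mf t|).
have p0 : (0 < p)%N := prime_gt0 pr.
pose q i := ((x i - c i) %/ (p ^ k)%N%:Z)%Z.
have tlt i : (`|(q i %% p%:Z)%Z| < p)%N.
  have pz : (0:int) < p%:Z by rewrite ltz_nat.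
  have h := ltz_pmod (q i) pz.
  by rewrite -ltz_nat gez0_abs // modz_ge0 // eqz_nat -lt0n.
pose t := [ffun i => Ordinal (tlt i)].
have dt : divs p k.+1 x (fun i => c i + (p ^ k)%N%:Z * (t i)%:Z).
  move=> i; rewrite ffunE /= gez0_abs ?modz_ge0 ?eqz_nat -?lt0n //.
  apply/dvdzP; exists (q i %/ p%:Z)%Z.
  have e1 := divzK (dx i); have e2 := divz_eq (q i) p%:Z.
  rewrite -/(q i) in e1.
  rewrite expnS PoszM.
  have -> : x i - (c i + (p ^ k)%N%:Z * (q i %% p%:Z)%Z) =
            q i * (p ^ k)%N%:Z - (p ^ k)%N%:Z * (q i %% p%:Z)%Z by rewrite -{1}(subrK (c i) (x i)) -e1; ring.
  rewrite {1}e2; ring.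
have := Mfs t _ dt; rewrite -/(Mf t) => hle.
have : phi (int_pt K x) <= \sum_t0 `|Mf t0|.
  apply: (le_trans hle); apply: (le_trans (ler_norm _)).
  rewrite (bigD1 t) //= lerDl; apply: sumr_ge0 => ? _; exact: normr_ge0.
by rewrite leNgt lt.
Qed.

Lemma divs_trans p r (a b c : 'I_r -> int) k m : (k <= m)%N ->
  divs p m a b -> divs p k b c -> divs p k a c.
Proof.
move=> km h1 h2 i; rewrite -(subrK (b i) (a i)) -addrA; apply: rpredD; last exact: h2.
apply: dvdz_trans (h1 i); rewrite dvdzE /=; exact: dvdn_exp2l.
Qed.

Lemma Ndivs p K N (HK : is_Qp p K N) r k (a b : 'I_r -> int) i :
  divs p k a b -> N ((a i)%:~R - (b i)%:~R) <= pk p k.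
Proof. move=> h; rewrite -intrB; apply: (Nint HK); have := h i; by rewrite dvdzE. Qed.

Lemma bounded p K N (HK : is_Qp p K N) r (phi : ('I_r -> K) -> rat)
  (loc : forall x, in_Zpr N x -> exists d, 0 < d /\ forall y, in_Zpr N y ->
      (forall i, N (y i - x i) < d) -> phi y = phi x) :
  exists M, forall x : 'I_r -> int, phi (int_pt K x) <= M.
Proof.
have pr := Qp_prime HK.
apply: NNPP => hn.
have H : forall M, exists x : 'I_r -> int, M < phi (int_pt K x).
  move=> M; apply: NNPP => h; apply: hn; exists M => x; rewrite leNgt; apply/negP => l.
  by apply: h; exists x.
have ex : forall k c, exists c', bad p phi c k -> divs p k c' c /\ bad p phi c' k.+1.
  move=> k c; have [b|nb] := classic (bad p phi c k).
    by have [c' hc] := step pr b; exists c'.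
  by exists c.
pose F k c := proj1_sig (constructive_indefinite_description _ (ex k c)).
have Fs k c : bad p phi c k -> divs p k (F k c) c /\ bad p phi (F k c) k.+1.
  exact: proj2_sig (constructive_indefinite_description _ (ex k c)).
pose fix sq n := if n is n'.+1 then F n' (sq n') else (fun _ : 'I_r => 0 : int).
have bs : forall n, bad p phi (sq n) n /\ (forall m, (m <= n)%N -> divs p m (sq n) (sq m)).
  elim=> [|n [bn dn]].
    split; last by move=> m; rewrite leqn0 => /eqP -> i; rewrite subrr dvdz0.
    move=> M; have [x hx] := H M; exists x; split=> // i; by rewrite expn0 dvd1z.
  have [d1 b1] := Fs n _ bn; split => // m; rewrite leq_eqVlt => /orP[/eqP ->|].
    by move=> i; rewrite subrr dvdz0.
  rewrite ltnS => mn; apply: (divs_trans mn d1); exact: dn.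
pose u i n : K := (sq n i)%:~R.
have cauchy i : forall e : rat, 0 < e -> exists n0, forall m n, (n0 <= m)%N -> (n0 <= n)%N ->
    N (u i m - u i n) < e.
  move=> e e0; have [n0 hn0] := pk_small pr e0; exists n0 => m n hm hn2.
  have -> : u i m - u i n = (u i m - u i n0) + - (u i n - u i n0) by ring.
  apply: (le_lt_trans _ hn0); apply: (Nle HK); rewrite ?(NN HK); apply: (Ndivs HK); exact: (bs _).2.
pose L i := proj1_sig (constructive_indefinite_description _ (Qp_complete HK (cauchy i))).
have Ls i := proj2_sig (constructive_indefinite_description _ (Qp_complete HK (cauchy i))).
have Lk k i : N (u i k - L i) <= pk p k.
  have [n0 hn0] := Ls i _ (pk_gt0 k pr).
  have -> : u i k - L i = - (u i (maxn n0 k) - u i k) + (u i (maxn n0 k) - L i) by ring.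
  apply: (Nle HK); first by rewrite (NN HK); apply: (Ndivs HK); apply: (bs _).2; rewrite leq_maxr.
  by apply: ltW; apply: hn0; rewrite leq_maxl.
have LZ : in_Zpr N L.
  move=> i; have := Lk 0%N i; rewrite /u /= /pk expr0 invr1 => h.
  by rewrite -(NN HK) -[- L i]add0r.
have [d [d0 hd]] := loc L LZ.
have [k hk] := pk_small pr d0.
have [x [dx lx]] := (bs k).1 (phi L).
suff : phi (int_pt K x) = phi L by move=> e; rewrite e ltxx in lx.
apply: hd.
  move=> i; rewrite /int_pt; apply: (Nint HK (k := 0)); by rewrite expn0 dvd1n.
move=> i; rewrite /int_pt.
have -> : (x i)%:~R - L i = ((x i)%:~R - u i k) + (u i k - L i) by ring.
apply: (Nlt HK); apply: le_lt_trans hk; [exact: (Ndivs HK) | exact: Lk].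
Qed.

Theorem lemma2p4 (p : nat) (K : fieldType) (N : K -> rat) (HK : is_Qp p K N)
    (r : nat) (f : ('I_r -> K) -> K)
    (fcont : continuous_on_Zpr N f)
    (fnz : forall x, in_Zpr N x -> f x <> 0) :
  ~ dense_in_Qp N (Rset f).
Proof.
have Npos x : in_Zpr N x -> 0 < N (f x).
  move=> hx; rewrite lt_def (Qp_Nge0 HK) andbT; apply/eqP => /(Qp_N0 HK); exact: fnz.
have loc : forall x, in_Zpr N x -> exists d, 0 < d /\ forall y, in_Zpr N y ->
      (forall i, N (y i - x i) < d) -> N (f y) = N (f x).
  move=> x hx; have [d [d0 hd]] := fcont x hx _ (Npos x hx); exists d; split => // y hy hc.
  have h := hd y hy hc.
  apply/eqP; rewrite eq_le; apply/andP; split.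
    have -> : f y = f x + (f y - f x) by ring.
    apply: (Nle HK) => //; exact: ltW.
  have h2 : N (f x) <= Num.max (N (f y)) (N (f y - f x)).
    have e : f x = f y + - (f y - f x) by ring.
    by rewrite {1}e -(NN HK (f y - f x)) (Qp_ultra HK).
  move: h2; rewrite le_max => /orP[//|h3]; have := lt_le_trans h h3; by rewrite ltxx.
have Zi (x : 'I_r -> int) : in_Zpr N (int_pt K x).
  move=> i; rewrite /int_pt; apply: (Nint HK (k := 0)); by rewrite expn0 dvd1n.
have [M1 h1] := bounded HK (phi := fun x => N (f x)) loc.
have [M2 h2] : exists M, forall x : 'I_r -> int, (N (f (int_pt K x)))^-1 <= M.
  apply: (bounded HK (phi := fun x => (N (f x))^-1)) => x hx.
  have [d [d0 hd]] := loc x hx; exists d; split => // y hy hc; by rewrite hd.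
pose x0 := fun _ : 'I_r => (0 : int).
have g0 := Npos _ (Zi x0).
have M1p : 0 < M1 := lt_le_trans g0 (h1 x0).
have M2p : 0 < M2 by apply: lt_le_trans (h2 x0); rewrite invr_gt0.
move=> dense.
have e0 : 0 < (M1 * M2)^-1 by rewrite invr_gt0 mulr_gt0.
have [z [[X [Y [_ ->]]] hz]] := dense 0 _ e0.
move: hz; rewrite subr0 (Qp_NM HK) (NV HK); last by apply/eqP; exact: fnz.
apply/negP; rewrite -leNgt invfM mulrC.
have gX := Npos _ (Zi X); have gY := Npos _ (Zi Y).
apply: ler_pM.
- by rewrite invr_ge0 ltW.
- by rewrite invr_ge0 ltW.
- by rewrite -[X in _ <= X](invrK (N _)) lef_pV2 ?posrE ?invr_gt0.
- by rewrite lef_pV2 ?posrE.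
Qed.
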